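(* Let $n$ be even, $k\ge2$, and let $f(x)=a_0(x)+2a_1(x)+\cdots+2^{k-1}a_{k-1}(x)$ from $\mathbb{V}_n$ to $\mathbb{Z}_{2^k}$ be gbent. Then its generalized Gray map $\psi(f):\mathbb{V}_n\times\mathbb{F}_2^{k-1}\to\mathbb{F}_2$, $\psi(f)(x,y_0,\ldots,y_{k-2})=\bigoplus_{i=0}^{k-2}a_i(x)y_i\oplus a_{k-1}(x)$, is $(k-1)$-plateaued, i.e. $\mathcal{W}_{\psi(f)}(w)\in\{0,\pm2^{n/2+k-1}\}$ for all $w\in\mathbb{V}_n\times\mathbb{F}_2^{k-1}$.
   Context: $\mathbb{V}_n$ is an $n$-dimensional $\mathbb{F}_2$-vector space with inner product $u\cdot x$; on $\mathbb{V}_n\times\mathbb{F}_2^{k-1}$ use the inner product $(u,z)\cdot(x,y)=u\cdot x\oplus z\cdot y$. $\mathcal{W}_F(w)=\sum_v(-1)^{F(v)\oplus w\cdot v}$. A Boolean function in $N$ variables is $s$-plateaued if its Walsh values lie in $\{0,\pm2^{(N+s)/2}\}$. $f$ is gbent if $|\sum_x\zeta_{2^k}^{f(x)}(-1)^{u\cdot x}|=2^{n/2}$ for all $u$, $\zeta_{2^k}=e^{2\pi i/2^k}$. *)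

(* Defs.v *)
From mathcomp Require Import all_boot all_order all_algebra all_field.
Set Implicit Arguments. Unset Strict Implicit. Unset Printing Implicit Defensive.
Import GRing.Theory Num.Theory.
Local Open Scope ring_scope.

Definition vec (n : nat) := {ffun 'I_n -> bool}.

Definition dotb (n : nat) (u x : vec n) : bool :=
  \big[addb/false]_(i < n) (u i && x i).

Definition sgn (b : bool) : algC := (-1) ^+ b.

Definition walsh (T : finType) (dot : T -> T -> bool) (F : T -> bool) (w : T) : algC :=
  \sum_(v : T) sgn (F v (+) dot w v).

(* zeta_{2^k} = e^{2 pi i / 2^k} = e^{i pi / 2^(k-1)} = (2^(k-1)).-root (-1) *)
Definition zeta (k : nat) : algC := (2 ^ k.-1)%N.-root (-1).

(* f = a_0 + 2 a_1 + ... + 2^(k-1) a_(k-1), as a natural number in [0, 2^k) *)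
Definition gfun (n k : nat) (a : 'I_k -> vec n -> bool) (x : vec n) : nat :=
  (\sum_(i < k) 2 ^ i * a i x)%N.

Definition gbent (n k : nat) (a : 'I_k -> vec n -> bool) : Prop :=
  forall u : vec n,
    `| \sum_(x : vec n) zeta k ^+ gfun a x * sgn (dotb u x) | = sqrtC (2%:R ^+ n).

Definition ext_dot (n m : nat) (w v : (vec n * vec m)%type) : bool :=
  dotb w.1 v.1 (+) dotb w.2 v.2.

Definition gray (n k : nat) (a : 'I_k.+2 -> vec n -> bool)
    (v : (vec n * vec k.+1)%type) : bool :=
  (\big[addb/false]_(i < k.+1) (a (widen_ord (leqnSn _) i) v.1 && v.2 i))
    (+) a ord_max v.1.

(* Main.v *)
Require Import Defs.
From mathcomp Require Import all_boot all_order all_algebra all_field.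
From mathcomp Require Import ring zify.
Set Implicit Arguments. Unset Strict Implicit. Unset Printing Implicit Defensive.
Import GRing.Theory Num.Theory.
Local Open Scope ring_scope.

Section NT.
Variable r : nat.
Local Notation M := (2 ^ r.+1)%N.
Definition zr : algC := (2 ^ r.+1)%N.-root (-1).
Local Notation z := zr.

Lemma M_gt0 : (0 < M)%N. Proof. by rewrite expn_gt0. Qed.
Lemma zM : z ^+ M = -1. Proof. by rewrite /zr rootCK // M_gt0. Qed.
Lemma z2M : z ^+ (2 * M)%N = 1. Proof. by rewrite mulnC exprM zM sqrrN expr1n. Qed.
Lemma m1_neq1 : (-1 : algC) != 1.
Proof. by rewrite eq_sym -subr_eq0 opprK -(natrD _ 1 1) pnatr_eq0. Qed.
Lemma z_neq0 : z != 0.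
Proof.
apply/eqP=> z0; have := zM; rewrite z0 expr0n.
have -> : (M == 0)%N = false by apply/negbTE; rewrite -lt0n M_gt0.
move/eqP; rewrite eq_sym oppr_eq0; exact/negP/oner_neq0.
Qed.
Lemma z_prim : (2 * M)%N.-primitive_root z.
Proof.
have e : (2 * M = 2 ^ r.+2)%N by rewrite (expnS 2 r.+1).
have Mg : (0 < 2 * M)%N by rewrite muln_gt0 M_gt0.
have [m pm] := @prim_order_exists _ (2 * M)%N zr Mg z2M.


rewrite e => /dvdn_pfactor [//|j]; rewrite leq_eqVlt => /predU1P[-> Em| lt].
  by rewrite -Em.
move=> Em; exfalso.
have : z ^+ M = 1.
  rewrite -(subnKC (ltnSE lt)) expnD exprM -Em (prim_expr_order pm) expr1n //.
by rewrite zM; apply/eqP; exact: m1_neq1.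
Qed.

Lemma conj_root (y : algC) : y ^+ (2 * M)%N = 1 -> y^* = y^-1.
Proof.
move=> Hy.
have y0 : y != 0.
  by apply/eqP => y0; move: (Hy); rewrite y0 expr0n muln_eq0 expn_eq0 /= => /eqP; rewrite eq_sym oner_eq0.
have n1 : `|y| = 1.
  apply/eqP; rewrite -(pexpr_eq1 (n:=(2*M)%N)) ?normr_ge0 ?muln_gt0 ?M_gt0 //.
  by rewrite -normrX Hy normr1.
have : y * y^* = 1 by rewrite -normCK n1 expr1n.
by move=> H; rewrite -[LHS]mul1r -(mulVf y0) -mulrA H mulr1.
Qed.
Lemma conj_z : z^* = z^-1. Proof. exact: conj_root z2M. Qed.

Definition Zz (x : algC) := exists p : {poly int}, x = (map_poly intr p).[z].
Lemma Zz_int (c : int) : Zz c%:~R.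
Proof. by exists c%:P; rewrite map_polyC hornerC. Qed.
Lemma Zz_nat (c : nat) : Zz c%:R.
Proof. by have := Zz_int c. Qed.
Lemma ZzD x y : Zz x -> Zz y -> Zz (x + y).
Proof. by case=> p -> [q ->]; exists (p + q); rewrite rmorphD hornerD. Qed.
Lemma ZzN x : Zz x -> Zz (- x).
Proof. by case=> p ->; exists (- p); rewrite rmorphN hornerN. Qed.
Lemma ZzB x y : Zz x -> Zz y -> Zz (x - y).
Proof. by move=> ? ?; apply: ZzD => //; apply: ZzN. Qed.
Lemma ZzM x y : Zz x -> Zz y -> Zz (x * y).
Proof. by case=> p -> [q ->]; exists (p * q); rewrite rmorphM hornerM. Qed.
Lemma Zz_z : Zz z.
Proof. by exists 'X; rewrite map_polyX hornerX. Qed.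
Lemma ZzX x n : Zz x -> Zz (x ^+ n).
Proof. by move=> Zx; elim: n => [|n IH]; [apply: (Zz_nat 1)|rewrite exprS; apply: ZzM]. Qed.
Lemma Zz_sum (I : Type) (s : seq I) (P : pred I) F :
  (forall i, P i -> Zz (F i)) -> Zz (\sum_(i <- s | P i) F i).
Proof. by move=> H; apply: big_ind => //; [apply: (Zz_nat 0)|apply: ZzD]. Qed.
Lemma Zz_horner (p : {poly int}) (y : algC) : Zz y -> Zz ((map_poly intr p).[y]).
Proof.
move=> Zy; rewrite horner_coef; apply: Zz_sum => i _.
by rewrite coef_map /=; apply: ZzM; [apply: Zz_int | apply: ZzX].
Qed.
Lemma z_inv : z^-1 = - z ^+ M.-1.
Proof.
apply: (mulIf z_neq0); rewrite mulVf ?z_neq0 // mulNr -exprSr prednK ?M_gt0 //.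
by rewrite zM opprK.
Qed.
Lemma Zz_zV : Zz z^-1.
Proof. by rewrite z_inv; apply/ZzN/ZzX/Zz_z. Qed.
Lemma conj_horner (p : {poly int}) (y : algC) : ((map_poly intr p).[y])^* = (map_poly intr p).[y^*].
Proof.
rewrite -horner_map /=; congr horner; rewrite -map_poly_comp; apply: eq_map_poly => c /=.
exact: rmorph_int.
Qed.
Lemma ZzC x : Zz x -> Zz x^*.
Proof. by case=> p ->; rewrite conj_horner conj_z; apply/Zz_horner/Zz_zV. Qed.
Lemma Zz_Aint x : Zz x -> x \in Aint.
Proof.
case=> p ->; rewrite horner_coef; apply: rpred_sum => i _.
rewrite coef_map /=; apply: rpredM; first exact: Aint_int.
apply: rpredX; apply: (@Aint_unity_root (2 * M)%N); first by rewrite muln_gt0 M_gt0.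
by rewrite unity_rootE z2M.
Qed.


Definition dvz (d x : algC) := exists y, Zz y /\ x = d * y.
Definition pi : algC := 1 - z.

Lemma Zz_pi : Zz pi. Proof. by apply: ZzB; [apply: (Zz_nat 1)|apply: Zz_z]. Qed.
Lemma pi_neq0 : pi != 0.
Proof.
apply/eqP; rewrite /pi => /eqP; rewrite subr_eq0 => /eqP z1.
by have := zM; rewrite -z1 expr1n => /esym/eqP; apply/negP/m1_neq1.
Qed.

Lemma geom (w : algC) n : (1 - w) * \sum_(l < n) w ^+ l = 1 - w ^+ n.
Proof. by rewrite -[1 - w]opprB mulNr -subrX1 opprB. Qed.

Lemma tower1 i : (i <= r.+1)%N -> exists e, Zz e /\ 1 - z ^+ (2 ^ i) = pi ^+ (2 ^ i) * e.
Proof.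
elim: i => [_|i IH lt].
  by exists 1; split; [apply: (Zz_nat 1)|rewrite expn0 !expr1 mulr1].
have [e [Ze He]] := IH (ltnW lt).
set w := z ^+ (2 ^ i) in He *.
set Mi := (2 ^ (r.+1 - i))%N.
have wM : w ^+ Mi = -1.
  by rewrite /w /Mi -exprM -expnD subnKC ?zM // ltnW.
set E := \sum_(l < Mi.+1) w ^+ l.
have hE : (1 - w) * E = 1 + w by rewrite geom exprS wM; ring.
exists (e ^+ 2 * E); split.
  by apply: ZzM; [apply: ZzX|apply: Zz_sum => l _; apply/ZzX/ZzX/Zz_z].
rewrite expnSr !exprM -/w.
have -> : 1 - w ^+ 2 = (1 - w) * ((1 - w) * E) by rewrite hE; ring.
by rewrite He; ring.
Qed.

Lemma tower2 i : exists h, Zz h /\ pi ^+ (2 ^ i) = 1 - z ^+ (2 ^ i) + 2%:R * h.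
Proof.
elim: i => [|i [h [Zh IH]]].
  by exists 0; split; [apply: (Zz_nat 0)|rewrite expn0 !expr1 /pi mulr0 addr0].
set w := z ^+ (2 ^ i) in IH *.
exists (w ^+ 2 - w + 2%:R * h * (1 - w) + 2%:R * h ^+ 2); split.
  have Zw : Zz w by apply/ZzX/Zz_z.
  have Z2 : Zz 2%:R by apply: Zz_nat.
  apply: ZzD; [apply: ZzD; [apply: ZzB; [apply: ZzX|]|]|] => //.
    by apply: ZzM; [apply: ZzM|apply: ZzB => //; apply: (Zz_nat 1)].
  by apply: ZzM => //; apply: ZzX.
rewrite expnSr !exprM -/w IH; ring.
Qed.

Lemma two_eq : exists e, Zz e /\ 2%:R = pi ^+ M * e.
Proof.
have [e [Ze He]] := tower1 (leqnn r.+1).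
by exists e; split => //; rewrite -He zM opprK.
Qed.

Lemma piM_eq : exists h, Zz h /\ pi ^+ M = 2%:R * h.
Proof.
have [h [Zh He]] := tower2 r.+1.
exists (1 + h); split; first by apply: ZzD => //; apply: (Zz_nat 1).
by rewrite He zM; ring.
Qed.

Lemma dvz_pi2 : dvz pi 2%:R.
Proof.
have [e [Ze He]] := two_eq.
exists (pi ^+ M.-1 * e); split; first by apply: ZzM => //; apply/ZzX/Zz_pi.
by rewrite He mulrA -exprS prednK ?M_gt0.
Qed.

Lemma not_dvz_pi1 : ~ dvz pi 1.
Proof.
move=> [y [Zy H]].
have [h [Zh Hh]] := piM_eq.
have H1 : 1 = 2%:R * (h * y ^+ M) by rewrite mulrA -Hh -exprMn -H expr1n.
have H2 : 2%:R^-1 = h * y ^+ M.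
  have n2 : (2%:R : algC) != 0 by rewrite pnatr_eq0.
  by apply: (mulfI n2); rewrite mulfV.

have A : (2%:R : algC)^-1 \in Aint by rewrite H2; apply/Zz_Aint/ZzM => //; apply: ZzX.
have Q : (2%:R : algC)^-1 \in Crat by rewrite rpredV rpred_nat.
have /intrP [m Hm] := Cint_rat_Aint Q A.
have : (1 : algC) = (2 * m)%:~R by rewrite intrM -Hm mulfV // pnatr_eq0.
move/eqP; rewrite -[1]/(1%:~R) eqr_int => /eqP; lia.
Qed.

Lemma Zz_form x : Zz x -> exists c : int, exists q, Zz q /\ x = c%:~R + pi * q.
Proof.
case=> p ->; elim/poly_ind: p => [|p a [c [q [Zq IH]]]].
  by exists 0, 0; split; [apply: (Zz_nat 0)|rewrite rmorph0 horner0 mulr0 addr0].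
exists (c + a), (q * z - c%:~R); split.
  by apply: ZzB; [apply: ZzM => //; apply: Zz_z|apply: Zz_int].
rewrite rmorphD rmorphM /= map_polyX map_polyC hornerMXaddC IH /pi intrD; ring.
Qed.

Lemma dvz_pi_cases x : Zz x -> dvz pi x \/ dvz pi (x - 1).
Proof.
move=> /Zz_form [c [q [Zq ->]]].
have [e [Ze He]] := dvz_pi2.
have := divz_eq c 2; set d := (c %/ 2)%Z; set m := (c %% 2)%Z => Hc.
have m0 : (0 <= m)%R by rewrite /m modz_ge0.
have m2 : (m < 2)%R by rewrite /m ltz_pmod.
have [m_0|m_1] : m = 0 \/ m = 1 by lia.
  left; exists (d%:~R * e + q); split.
    by apply: ZzD => //; apply: ZzM => //; apply: Zz_int.
  by rewrite Hc m_0 addr0 intrM (_ : ((2:int)%:~R : algC) = 2%:R) // He; ring.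
right; exists (d%:~R * e + q); split.
  by apply: ZzD => //; apply: ZzM => //; apply: Zz_int.
by rewrite Hc m_1 intrD intrM (_ : ((2:int)%:~R : algC) = 2%:R) // He; ring.
Qed.

Lemma dvzD d x y : dvz d x -> dvz d y -> dvz d (x + y).
Proof.
move=> [a [Za ->]] [b [Zb ->]]; exists (a + b); split; first exact: ZzD.
by rewrite mulrDr.
Qed.

Lemma dvzMl d x c : dvz d x -> Zz c -> dvz d (x * c).
Proof.
move=> [a [Za ->]] Zc; exists (a * c); split; first exact: ZzM.
by rewrite mulrA.
Qed.

Lemma pi_prime x y : Zz x -> Zz y -> dvz pi (x * y) -> dvz pi x \/ dvz pi y.
Proof.
move=> Zx Zy Dxy.
case: (dvz_pi_cases Zx) => [|Dx]; first by left.
case: (dvz_pi_cases Zy) => [|Dy]; first by right.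
exfalso; apply: not_dvz_pi1.
have H : dvz pi (x * y - 1).
  have -> : x * y - 1 = (x - 1) * y + (y - 1) by ring.
  by apply: dvzD => //; apply: dvzMl.
case: Dxy => a [Za Ha]; case: H => b [Zb Hb].
exists (a - b); split; first exact: ZzB.
by rewrite mulrBr -Ha -Hb; ring.
Qed.

Lemma conj_pi : pi^* = pi * (- z^-1).
Proof.
rewrite /pi rmorphB rmorph1 /= conj_z mulrN mulrBl mul1r mulfV ?z_neq0 // opprB.
done.

Qed.

Lemma dvz_pi_conj x : dvz pi x -> dvz pi x^*.
Proof.
move=> [y [Zy ->]]; exists (- z^-1 * y^*); split.
  by apply: ZzM; [apply/ZzN/Zz_zV|apply: ZzC].
by rewrite rmorphM /= conj_pi mulrA.
Qed.

Lemma main_val r0 x : Zz x -> dvz (pi ^+ (2 * r0)) (x * x^*) -> dvz (pi ^+ r0) x.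
Proof.
elim: r0 x => [|r0 IH] x Zx [g [Zg H]].
  by exists x; split => //; rewrite expr0 mul1r.
have dx : dvz pi x.
  have : dvz pi (x * x^*).
    exists (pi ^+ (2 * r0).+1 * g); split; first by apply: ZzM => //; apply/ZzX/Zz_pi.
    by rewrite H mulnS addSn add1n !exprS; ring.
  case/pi_prime => //; first exact: ZzC.
  by move/dvz_pi_conj; rewrite conjCK.
case: dx => y [Zy Hy].
have Hyy : y * y^* = pi ^+ (2 * r0) * (- z * g).
  have : pi ^+ 2 * (- z^-1 * (y * y^*)) = pi ^+ 2 * (pi ^+ (2 * r0) * g).
    rewrite [RHS]mulrA -exprD (_ : (2 + 2 * r0 = 2 * r0.+1)%N); last by lia.
    rewrite -H Hy rmorphM /= conj_pi; ring.
  move/(mulfI (expf_neq0 2 pi_neq0)) => E.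
  have zz : z * z^-1 = 1 by rewrite mulfV ?z_neq0.
  by rewrite mulrCA -E mulrA mulrNN zz mul1r.
have [c [Zc Hc]] := IH y Zy (ex_intro _ _ (conj (ZzM (ZzN Zz_z) Zg) Hyy)).
by exists c; split => //; rewrite Hy Hc exprS mulrA.
Qed.

Lemma key2 x g : Zz x -> Zz g -> x * x^* = 4%:R * g -> dvz 2%:R x.
Proof.
move=> Zx Zg H.
have [e [Ze He]] := two_eq.
have [h [Zh Hh]] := piM_eq.
have : dvz (pi ^+ (2 * M)) (x * x^*).
  exists (e ^+ 2 * g); split; first by apply: ZzM => //; apply: ZzX.
  rewrite H (_ : 4%:R = 2%:R * 2%:R :> algC); last by rewrite -natrM.
  by rewrite He mulnC exprM; ring.
move/(main_val Zx) => [c [Zc ->]].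
by exists (h * c); split; [apply: ZzM|rewrite Hh mulrA].
Qed.

Lemma descent m x : Zz x -> x * x^* = 2%:R ^+ (2 * m) -> exists b, Zz b /\ x = 2%:R ^+ m * b.
Proof.
elim: m x => [|m IH] x Zx H.
  by exists x; rewrite expr0 mul1r.
have H4 : x * x^* = 4%:R * 2%:R ^+ (2 * m).
  by rewrite H mulnS exprD (_ : 4%:R = 2%:R ^+ 2 :> algC) // -natrX.
have [y [Zy Hy]] := key2 Zx (ZzX _ (Zz_nat 2)) H4.
have Hyy : y * y^* = 2%:R ^+ (2 * m).
  have n4 : (4%:R : algC) != 0 by rewrite pnatr_eq0.
  apply: (mulfI n4); rewrite -H4 Hy rmorphM /= rmorph_nat (_ : 4%:R = 2%:R * 2%:R :> algC).
    ring.
  by rewrite -natrM.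
have [b [Zb Hb]] := IH y Zy Hyy.
by exists b; split => //; rewrite Hy Hb exprS mulrA.
Qed.

Definition Rz (x : algC) := exists c : nat -> int, x = \sum_(j < M) (c j)%:~R * z ^+ j.

Lemma Rz_step x a : Rz x -> Rz (x * z + a%:~R).
Proof.
case=> c ->.
set Mp := M.-1; have EM : M = Mp.+1 by rewrite prednK ?M_gt0.
have zMp : z ^+ Mp.+1 = -1 by rewrite -EM zM.
exists (fun j => if j == 0%N then a - c Mp else c j.-1).
rewrite EM mulr_suml big_ord_recr /= big_ord_recl /= expr0 mulr1.
under eq_bigr => i _ do rewrite -mulrA -exprSr.
rewrite -mulrA -exprSr zMp intrB.
under [in RHS]eq_bigr => i _ do rewrite add0n /bump leq0n add1n.
ring.
Qed.

Lemma Zz_Rz x : Zz x -> Rz x.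
Proof.
case=> p ->; elim/poly_ind: p => [|p a IH].
  by exists (fun _ => 0); rewrite rmorph0 horner0 big1 // => j _; rewrite mul0r.
rewrite rmorphD rmorphM /= map_polyX map_polyC hornerMXaddC.
exact: Rz_step.
Qed.

Lemma orth (a b : nat) : (a < M)%N -> (b < M)%N ->
  \sum_(t < M) (z ^+ a / z ^+ b) ^+ (2 * t + 1)%N = if a == b then M%:R else 0.
Proof.
move=> ha hb; case: eqP => [->|nab].
  under eq_bigr => t _ do rewrite divff ?expr1n ?expf_neq0 ?z_neq0 //.
  by rewrite sumr_const card_ord.
set w := z ^+ a / z ^+ b.
have w2 : w ^+ 2 != 1.
  apply/eqP => H; apply: nab.
  have nz : (z ^+ b) ^+ 2 != 0 by rewrite !expf_neq0 ?z_neq0.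
  have : z ^+ (a * 2) == z ^+ (b * 2).
    rewrite !exprM; apply/eqP.
    by rewrite -[LHS](divfK nz) -exprVn -exprMn -/w H mul1r.
  rewrite (eq_prim_root_expr z_prim) !modn_small; last 2 first.
  - by rewrite mulnC ltn_pmul2l.
  - by rewrite mulnC ltn_pmul2l.
  by rewrite eqn_mul2r /= => /eqP.
have E : \sum_(t < M) w ^+ (2 * t + 1)%N = w * \sum_(t < M) (w ^+ 2) ^+ t.
  by rewrite mulr_sumr; apply: eq_bigr => t _; rewrite addn1 exprS exprM.
have wM : (w ^+ 2) ^+ M = 1.
  rewrite -exprM /w exprMn exprVn -!exprM [(a * _)%N]mulnC [(b * _)%N]mulnC !(exprM z (2 * M)) z2M !expr1n.
  by rewrite invr1 mulr1.
have : (w ^+ 2 - 1) * \sum_(t < M) (w ^+ 2) ^+ t = 0 by rewrite -subrX1 wM subrr.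
by move/eqP; rewrite mulf_eq0 subr_eq0 (negbTE w2) /= => /eqP S0; rewrite E S0 mulr0.
Qed.

Lemma cop t : coprime (2 * t + 1)%N (2 * M).
Proof.
rewrite (_ : (2 * M = 2 ^ r.+2)%N); last by rewrite (expnS 2 r.+1).
by apply: coprimeXr; rewrite coprimen2 oddD oddM.
Qed.

Definition sig t : {rmorphism algC -> algC} := sval (Qn_aut_exists (cop t)).
Lemma sigE t y : y ^+ (2 * M)%N = 1 -> sig t y = y ^+ (2 * t + 1)%N.
Proof. exact: (svalP (Qn_aut_exists (cop t)) y). Qed.

Lemma sig_term t (d : int) (e a : nat) :
  sig t (d%:~R * z ^+ e) / (z ^+ a) ^+ (2 * t + 1)%N = d%:~R * (z ^+ e / z ^+ a) ^+ (2 * t + 1)%N.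
Proof.
rewrite rmorphM rmorph_int rmorphXn /= sigE ?z2M // exprMn exprVn.
by rewrite (exprAC z (2 * t + 1)%N) mulrA.
Qed.


Lemma inversion (I : finType) (d : I -> int) (e : I -> nat) (a : nat) :
  (forall i, e i < M)%N -> (a < M)%N ->
  \sum_(t < M) sig t (\sum_i (d i)%:~R * z ^+ e i) / (z ^+ a) ^+ (2 * t + 1)%N
    = M%:R * \sum_(i | e i == a) (d i)%:~R.
Proof.
move=> he ha.
under eq_bigr => t _ do rewrite rmorph_sum mulr_suml.
under eq_bigr => t _ do under eq_bigr => i _ do rewrite sig_term.
rewrite exchange_big /=.
under eq_bigr => i _ do rewrite -mulr_sumr orth //.
rewrite [in RHS]big_mkcond [in RHS]mulr_sumr; apply: eq_bigr => i _.
by case: (e i == a); rewrite ?mulr0 // mulrC.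
Qed.

Lemma sumsq (c : nat -> int) :
  let b := \sum_(j < M) (c j)%:~R * z ^+ j in
  \sum_(t < M) sig t b * (sig t b)^* = M%:R * \sum_(j < M) (c j)%:~R ^+ 2.
Proof.
move=> b.
have T : forall t, sig t b * (sig t b)^* =
    \sum_(j < M) \sum_(l < M) (c j)%:~R * (c l)%:~R * (z ^+ j / z ^+ l) ^+ (2 * t + 1)%N.
  move=> t; rewrite /b rmorph_sum /= rmorph_sum /= mulr_suml; apply: eq_bigr => j _.
  rewrite mulr_sumr; apply: eq_bigr => l _.
  rewrite !rmorphM /= !rmorph_int !rmorphXn /= !sigE ?z2M //.
  rewrite (conj_root (y := (z ^+ (2 * t + 1)%N))); last first.
    by rewrite -exprM mulnC exprM z2M expr1n.
  rewrite exprMn exprVn !(exprAC z (2 * t + 1)%N) exprVn; ring.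
under eq_bigr => t _ do rewrite T.
rewrite exchange_big /=; under eq_bigr => j _ do rewrite exchange_big /=.
under eq_bigr => j _ do under eq_bigr => l _ do rewrite -mulr_sumr orth //.
rewrite mulr_sumr; apply: eq_bigr => j _.
rewrite (bigD1 j) //= eqxx big1 ?addr0; first by rewrite mulrC expr2.
move=> l; rewrite eq_sym => /negbTE nl.
by rewrite (_ : (nat_of_ord j == l) = false) ?mulr0 //; apply/negbTE; rewrite -(inj_eq val_inj) in nl; rewrite nl.
Qed.


Lemma sig_conj t (c : nat -> int) :
  let b := \sum_(j < M) (c j)%:~R * z ^+ j in (sig t b)^* = sig t b^*.
Proof.
move=> b; rewrite /b !rmorph_sum /=; apply: eq_bigr => j _.
rewrite !rmorphM /= !rmorph_int !rmorphXn /= conj_z sigE ?z2M //.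
rewrite (sigE t (y := z^-1)); last by rewrite exprVn z2M invr1.
rewrite (conj_root (y := (z ^+ (2 * t + 1)%N))); last first.
  by rewrite -exprM mulnC exprM z2M expr1n.
by rewrite !exprVn -!exprM mulnC.
Qed.

Lemma NT_main (I : finType) (s : I -> int) (N : I -> nat) (m : nat) :
  injective N -> (forall i, N i < M)%N ->
  let al := \sum_i (s i)%:~R * z ^+ N i in
  al * al^* = 2%:R ^+ (2 * m) ->
  forall i, ((s i)%:~R : algC) = 0 \/ ((s i)%:~R : algC) = 2%:R ^+ m \/ ((s i)%:~R : algC) = - 2%:R ^+ m.
Proof.
move=> Ninj NM al Hal i0.
have Zal : Zz al by apply: Zz_sum => i _; apply: ZzM; [apply: Zz_int|apply/ZzX/Zz_z].
have [b [Zb Hb]] := descent Zal Hal.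
have [c Hc] := Zz_Rz Zb.
have n2m : (2%:R : algC) ^+ m != 0 by rewrite expf_neq0 // pnatr_eq0.
have Hbb : b * b^* = 1.
  have : (2%:R ^+ m * 2%:R ^+ m) * (b * b^*) = (2%:R ^+ m * 2%:R ^+ m) * 1.
    have E1 : al * al^* = (2%:R ^+ m * 2%:R ^+ m) * (b * b^*).
      by rewrite Hb rmorphM /= rmorphXn /= rmorph_nat; ring.
    have E2 : (2%:R ^+ m * 2%:R ^+ m : algC) = 2%:R ^+ (2 * m) by rewrite -exprD addnn -mul2n.
    by rewrite -E1 Hal E2 mulr1.
  exact: (mulfI (mulf_neq0 n2m n2m)).
have Ht : forall t, sig t b * (sig t b)^* = 1.
  move=> t; rewrite Hc sig_conj -Hc -rmorphM Hbb; exact: rmorph1.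
have Hs : \sum_(j < M) (c j)%:~R ^+ 2 = 1 :> algC.
  have S := sumsq c; rewrite /= -Hc in S.
  rewrite (eq_bigr (fun _ => 1)) in S; last by move=> t _; exact: Ht.
  rewrite sumr_const card_ord in S.
  have nM : (M%:R : algC) != 0 by rewrite pnatr_eq0 -lt0n M_gt0.
  by apply: (mulfI nM); rewrite -S mulr1.
have Hsi : (\sum_(j < M) (c j) ^+ 2 = 1)%R.
  apply: (@intr_inj algC); rewrite rmorph_sum /=.
  by under eq_bigr => j _ do rewrite rmorphXn /=.
have [j0 Hj0 Hoth] : exists2 j0 : 'I_M, c j0 ^+ 2 = 1 & forall j : 'I_M, j != j0 -> c j = 0.
  have [j0 nz] : exists j0 : 'I_M, c j0 != 0.
    case: (boolP [exists j0 : 'I_M, c j0 != 0]) => [/existsP //|/existsPn H].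
    exfalso; move: Hsi; rewrite big1 // => j _.
    by have := H j; rewrite negbK => /eqP ->; rewrite expr0n.
  rewrite (bigD1 j0) //= in Hsi.
  set Rs := \sum_(i < M | i != j0) c i ^+ 2 in Hsi.
  have rest_ge0 : 0 <= Rs by apply: sumr_ge0 => j _; apply: sqr_ge0.
  have [Hc0 rest0] : c j0 ^+ 2 = 1 /\ Rs = 0.
    clearbody Rs; move: Hsi rest_ge0 nz; rewrite !expr2 => A B C.
    have [hp|hn] : (0 < c j0 \/ c j0 < 0)%R by lia.
    1,2: split; nia.
  exists j0 => // j nj.
    have := psumr_eq0P (fun (j : 'I_M) _ => sqr_ge0 (c j)) rest0 nj.
    by move/eqP; rewrite expf_eq0 /= => /eqP.
have Hb1 : b = (c j0)%:~R * z ^+ j0.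
  by rewrite Hc (bigD1 j0) //= big1 ?addr0 // => j /Hoth ->; rewrite mul0r.
have Hal1 : al = \sum_(u < 1) ((2 ^+ m * c j0)%R)%:~R * z ^+ (val j0).
  by rewrite big_ord1 Hb Hb1 intrM rmorphXn /= mulrA.
have I1 := inversion s NM (NM i0).
rewrite [X in _ = _ * X](eq_bigl (pred1 i0)) in I1; last first.
  by move=> i; rewrite /= (inj_eq Ninj).
rewrite big_pred1_eq in I1.
have I2 := inversion (I := 'I_1) (fun _ => (2 ^+ m * c j0)%R) (e := fun _ => val j0) (fun _ => ltn_ord j0) (NM i0).
have E : M%:R * (s i0)%:~R = M%:R * \sum_(u < 1 | val j0 == N i0) ((2 ^+ m * c j0)%R)%:~R :> algC.
  by rewrite -I1 -I2 -Hal1.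
have nM : (M%:R : algC) != 0 by rewrite pnatr_eq0 -lt0n M_gt0.
move/(mulfI nM): E; rewrite big_mkcond big_ord1 /=.
case: eqP => _ ->; last by left.
have : (c j0 == 1) || (c j0 == -1) by rewrite -sqrf_eq1 Hj0.
case/orP => /eqP ->; rewrite intrM rmorphXn /=; right; [left|right]; rewrite ?mulr1 ?mulrN1 //.
Qed.
End NT.


Definition Nb (m : nat) (y : vec m) : nat := (\sum_(i < m) 2 ^ i * y i)%N.

Lemma Nb_S m (y : vec m.+1) : Nb y = (y ord0 + 2 * Nb [ffun i => y (lift ord0 i)])%N.
Proof.
rewrite /Nb big_ord_recl expn0 mul1n; congr (_ + _)%N; rewrite big_distrr /=.
by apply: eq_bigr => i _; rewrite ffunE /bump leq0n add1n expnS mulnA.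
Qed.

Lemma Nb_lt m (y : vec m) : (Nb y < 2 ^ m)%N.
Proof.
elim: m y => [|m IH] y; first by rewrite /Nb big_ord0.
rewrite Nb_S expnS; have := IH [ffun i => y (lift ord0 i)].
by case: (y ord0) => /=; lia.
Qed.

Lemma Nb_inj m : injective (@Nb m).
Proof.
elim: m => [|m IH] y y' H; first by apply/ffunP => -[].
move: H; rewrite !Nb_S => H.
have h0 : y ord0 = y' ord0 by move: H; case: (y ord0); case: (y' ord0) => //=; lia.
have ht : [ffun i => y (lift ord0 i)] = [ffun i => y' (lift ord0 i)].
  by apply: IH; move: H; rewrite h0 => /eqP; rewrite eqn_add2l eqn_mul2l /= => /eqP.
apply/ffunP => i; case: (unliftP ord0 i) => [j ->|->] //.
by have := congr1 (fun f : vec m => f j) ht; rewrite !ffunE.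
Qed.

Lemma sum_bool_sgn (b1 b2 : bool) :
  \sum_(b : bool) sgn (b1 && b) * sgn (b2 && b) = if b1 == b2 then 2%:R else 0.
Proof.
rewrite big_bool.
by case: b1; case: b2; rewrite /sgn /= ?expr0 ?expr1; ring.
Qed.

Lemma char_sum m (c d : vec m) :
  \sum_(y : vec m) sgn (dotb c y (+) dotb d y) = if c == d then (2 ^ m)%:R else 0.
Proof.
have E : forall y : vec m, sgn (dotb c y (+) dotb d y) =
    \prod_(i < m) (sgn (c i && y i) * sgn (d i && y i)).
  move=> y; rewrite /sgn signr_addb /dotb.
  rewrite !(@big_morph _ _ (fun b : bool => (-1 : algC) ^+ (nat_of_bool b)) 1 *%R false addb (@signr_addb _) (expr0 _)).
  by rewrite big_split.
under eq_bigr => y _ do rewrite E.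
rewrite -(bigA_distr_bigA (fun (i : 'I_m) (b : bool) => sgn (c i && b) * sgn (d i && b))).
under eq_bigr => i _ do rewrite sum_bool_sgn.
case: eqP => [->|neq].
  under eq_bigr => i _ do rewrite eqxx.
  by rewrite prodr_const card_ord natrX.
have [i ni] : exists i, c i != d i.
  case: (boolP [exists i, c i != d i]) => [/existsP //|/existsPn H].
  by exfalso; apply: neq; apply/ffunP => i; have := H i; rewrite negbK => /eqP.
by rewrite (bigD1 i) //= (negbTE ni) mul0r.
Qed.

Lemma addb4 (A B C D : bool) : (B (+) A) (+) (C (+) D) = (A (+) C) (+) (B (+) D).
Proof. by case: A; case: B; case: C; case: D. Qed.

Unset Implicit Arguments.
Theorem proposition6 (n k' : nat) (a : 'I_k'.+2 -> vec n -> bool) :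
  ~~ odd n ->
  gbent a ->
  forall w : (vec n * vec k'.+1)%type,
    walsh (@ext_dot n k'.+1) (gray a) w \in
      [:: 0; (2 ^ (n./2 + k'.+1))%:R; - (2 ^ (n./2 + k'.+1))%:R].
Proof.
move=> hn hb [u z0].
pose ap x : vec k'.+1 := [ffun i : 'I_k'.+1 => a (widen_ord (leqnSn _) i) x].
pose S (y : vec k'.+1) : int := \sum_(x | ap x == y) (-1) ^+ (a ord_max x (+) dotb u x).
have HS : forall y, (S y)%:~R = \sum_(x | ap x == y) sgn (a ord_max x (+) dotb u x) :> algC.
  by move=> y; rewrite rmorph_sum; apply: eq_bigr => x _; rewrite rmorphXn rmorphN1.
have Hw : walsh (@ext_dot n k'.+1) (gray a) (u, z0) = (2 ^ k'.+1)%:R * (S z0)%:~R.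
  rewrite /walsh (eq_bigr (fun v => sgn (a ord_max v.1 (+) dotb u v.1) * sgn (dotb (ap v.1) v.2 (+) dotb z0 v.2))); last first.
    move=> [x y] _ /=; rewrite /sgn -signr_addb /gray /ext_dot /=; congr (_ ^+ _).
    have -> : dotb (ap x) y = \big[addb/false]_(i < k'.+1) (a (widen_ord (leqnSn _) i) x && y i).
      by rewrite /dotb; apply: eq_bigr => i _; rewrite ffunE.
    by rewrite addb4.
  rewrite -(pair_bigA _ (fun x y => sgn (a ord_max x (+) dotb u x) * sgn (dotb (ap x) y (+) dotb z0 y))) /=.
  under eq_bigr => x _ do rewrite -mulr_sumr char_sum.
  rewrite HS mulr_sumr [in RHS]big_mkcond; apply: eq_bigr => x _.
  by case: eqP => _; rewrite ?mulr0 // mulrC.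
have gf : forall x, gfun a x = (Nb (ap x) + 2 ^ k'.+1 * a ord_max x)%N.
  move=> x; rewrite /gfun big_ord_recr /=; congr (_ + _)%N.
  by apply: eq_bigr => i _; rewrite ffunE.
have Hal : \sum_(x : vec n) zeta k'.+2 ^+ gfun a x * sgn (dotb u x)
    = \sum_(y : vec k'.+1) (S y)%:~R * (zr k') ^+ Nb y.
  rewrite (_ : zeta k'.+2 = zr k') //.
  under eq_bigr => x _ do rewrite gf exprD exprM zM -mulrA /sgn -signr_addb.
  rewrite (partition_big ap predT) //=; apply: eq_bigr => y _.
  rewrite HS mulr_suml; apply: eq_bigr => x /eqP ->.
  by rewrite mulrC.
have Hg := hb u; rewrite Hal in Hg.
have en : (2 * n./2)%N = n by move: (odd_double_half n); rewrite (negbTE hn) add0n -mul2n.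
have Hal2 : let al := \sum_(y : vec k'.+1) (S y)%:~R * (zr k') ^+ Nb y in
    al * al^* = 2%:R ^+ (2 * n./2).
  by rewrite /= -normCK Hg sqrtCK en.
have := NT_main (@Nb_inj _) (@Nb_lt _) Hal2 z0.
rewrite Hw !inE !natrX !exprD.
by case=> [->|[->|->]]; rewrite ?mulr0 ?eqxx //= mulrC ?mulNr eqxx ?orbT.
Qed.
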